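(* The Lie ideal $\operatorname{Im}\psi_0$ of the Lie algebra $\operatorname{Ker}\psi_1$ and the Lie ideal $\operatorname{Ad}_{E^e}(\Lambda)$ of $\operatorname{Der}_{E^e}(\Lambda)$ (inner derivations of $\Lambda$ which are $E$-bimodule morphisms) are isomorphic Lie algebras.
   Context: Let $k$ be an algebraically closed field and $Q$ a finite quiver; $Q_n$ is the set of paths of length $n$ ($Q_0$ = vertices, $Q_1$ = arrows), $s(\gamma),t(\gamma)$ are source and terminus of a path $\gamma$; in $kQ$, $\beta\alpha$ is the concatenation ''first $\alpha$, then $\beta$'' if $t(\alpha)=s(\beta)$, and $0$ otherwise. Let $Z$ be a minimal set of paths of length $\ge 2$ (no proper subpath of an element of $Z$ lies in $Z$) such that $\Lambda=kQ/\langle Z\rangle$ is finite dimensional; $E\subset\Lambda$ is the subalgebra spanned by the vertices. Let $B$ be the set of paths (vertices included) not containing any element of $Z$ as a subpath. Paths are parallel if they have the same source and terminus; $X//Y$ is the set of pairs of parallel paths in $X\times Y$ and $k(X//Y)$ the vector space with basis $X//Y$. For a path $\varepsilon$ and $(a,\gamma)\in Q_1//B$, $\varepsilon^{(a,\gamma)}$ is the sum of all paths in $B$ obtained by replacing one occurrence of $a$ in $\varepsilon$ by $\gamma$ ($0$ if none), and $(\eta,\varepsilon^{(a,\gamma)})=\sum_i(\eta,\varepsilon_i)$ if $\varepsilon^{(a,\gamma)}=\sum_i\varepsilon_i$. Maps: $\psi_0:k(Q_0//B)\to k(Q_1//B)$, $(e,\gamma)\mapsto\sum_{a\in Q_1,\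 s(a)=e,\ a\gamma\in B}(a,a\gamma)-\sum_{a\in Q_1,\ t(a)=e,\ \gamma a\in B}(a,\gamma a)$; $\psi_1:k(Q_1//B)\to k(Z//B)$, $(a,\gamma)\mapsto\sum_{p\in Z}(p,p^{(a,\gamma)})$. $k(Q_1//B)$ carries the bilinear bracket $[(a,\gamma),(b,\varepsilon)]=(b,\varepsilon^{(a,\gamma)})-(a,\gamma^{(b,\varepsilon)})$, for which $\operatorname{Ker}\psi_1$ is a Lie subalgebra and $\operatorname{Im}\psi_0$ a Lie ideal of it. *)

(* Defs.v *)
(* with multinomials' monoid algebras {malg k[K]}
   (finitely supported functions K -> k, an lmodType over k) used as the
   free vector spaces k(X) on the (countable) sets of paths / pairs of paths. *)
From HB Require Import structures.
From mathcomp Require Import all_boot all_order all_algebra.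
From mathcomp Require Import finmap.
From mathcomp Require Import monalg.
Set Implicit Arguments. Unset Strict Implicit. Unset Printing Implicit Defensive.
Import GRing.Theory.
Local Open Scope ring_scope.

Section QuiverAlgebra.
Variables (k : fieldType) (V A : finType) (src tgt : A -> V).

(* A path is a pair (starting vertex, list of arrows in traversal order);
   the trivial path at v (the vertex v) is (v, [::]). *)
Definition qpath := (V * seq A)%type.

Definition valid (p : qpath) : bool :=
  if p.2 is a :: q then (src a == p.1) && path.path (fun x y => tgt x == src y) a q
  else true.

Definition psrc (p : qpath) : V := p.1.
Definition ptgt (p : qpath) : V := foldl (fun _ a => tgt a) p.1 p.2.

(* comp b a = "b a" = first a, then b (meaningful when ptgt a = psrc b) *)
Definition comp (b a : qpath) : qpath := (a.1, a.2 ++ b.2).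
Definition vpath (v : V) : qpath := (v, [::]).
Definition apath (a : A) : qpath := (src a, [:: a]).

Definition visits (d : qpath) (v : V) : bool :=
  (d.1 == v) || has (fun a => tgt a == v) d.2.

Definition subpath (g d : qpath) : bool :=
  if g.2 is [::] then visits d g.1 else infix g.2 d.2.

Variable Z : seq qpath.

Definition inB (d : qpath) : bool := valid d && ~~ has (fun z => subpath z d) Z.

(* Lambda = kQ/<Z>, realised on its basis B: elements of {malg k[qpath]}
   supported in B, with the truncated path multiplication. *)
Definition Lam := {malg k[qpath]}.
Definition inLam (x : Lam) : Prop := forall d, d \in msupp x -> inB d.

Definition mulB (b a : qpath) : Lam :=
  if (ptgt a == psrc b) && inB (comp b a) then << comp b a >> else 0.
Definition lmul (x y : Lam) : Lam :=
  \sum_(b <- msupp x) \sum_(a <- msupp y) (x@_b * y@_a) *: mulB b a.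

Definition evert (v : V) : Lam := << vpath v >>.

Definition ad (m : Lam) : Lam -> Lam := fun y => lmul m y - lmul y m.

Definition Ebimod (D : Lam -> Lam) : Prop :=
  forall v y, inLam y ->
    D (lmul (evert v) y) = lmul (evert v) (D y) /\
    D (lmul y (evert v)) = lmul (D y) (evert v).

Definition inAdE (D : Lam -> Lam) : Prop :=
  exists m, [/\ inLam m, Ebimod (ad m) & forall y, inLam y -> D y = ad m y].

Definition Q0B := {malg k[(V * qpath)%type]}.
Definition Q1B := {malg k[(A * qpath)%type]}.
Definition inQ0B (g : Q0B) : Prop :=
  forall p, p \in msupp g -> [&& inB p.2, psrc p.2 == p.1 & ptgt p.2 == p.1].
Definition inQ1B (g : Q1B) : Prop :=
  forall p, p \in msupp g -> [&& inB p.2, psrc p.2 == src p.1 & ptgt p.2 == tgt p.1].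

Definition psi0_basis (p : V * qpath) : Q1B :=
  let: (e, g) := p in
  \sum_(a : A | (src a == e) && inB (comp (apath a) g)) << (a, comp (apath a) g) >>
  - \sum_(a : A | (tgt a == e) && inB (comp g (apath a))) << (a, comp g (apath a)) >>.
Definition psi0 (g : Q0B) : Q1B := \sum_(p <- msupp g) g@_p *: psi0_basis p.

Definition inImpsi0 (x : Q1B) : Prop := exists2 g, inQ0B g & x = psi0 g.

Definition repl (a : A) (g eps : qpath) : Lam :=
  \sum_(i < size eps.2 | nth a eps.2 i == a)
     (let r := (eps.1, take i eps.2 ++ g.2 ++ drop i.+1 eps.2) in
      if inB r then << r >> else 0).

Definition pairl (b : A) (x : Lam) : Q1B :=
  \sum_(d <- msupp x) x@_d *: << (b, d) >>.

Definition br_basis (p q : A * qpath) : Q1B :=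
  pairl q.1 (repl p.1 p.2 q.2) - pairl p.1 (repl q.1 q.2 p.2).

Definition bracket (x y : Q1B) : Q1B :=
  \sum_(p <- msupp x) \sum_(q <- msupp y) (x@_p * y@_q) *: br_basis p q.

End QuiverAlgebra.

(* Main.v *)
Require Import Defs.
From HB Require Import structures.
From mathcomp Require Import all_boot all_order all_algebra.
From mathcomp Require Import finmap.
From mathcomp Require Import monalg.
Set Implicit Arguments. Unset Strict Implicit. Unset Printing Implicit Defensive.
Import GRing.Theory.
Local Open Scope ring_scope.

Section Mext.
Context {k : fieldType} {K : choiceType} {M : lmodType k}.

Definition mext (f : K -> M) (x : {malg k[K]}) : M :=
  \sum_(p <- msupp x) x@_p *: f p.

Lemma mextEw (f : K -> M) (d : {fset K}) x : (msupp x `<=` d)%fset ->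
  mext f x = \sum_(p <- d) x@_p *: f p.
Proof.
move=> le; rewrite /mext (big_fset_incl _ le) // => p _ /mcoeff_outdom ->.
by rewrite scale0r.
Qed.

Lemma mext_lin (f : K -> M) c x y :
  mext f (c *: x + y) = c *: mext f x + mext f y.
Proof.
pose d := (msupp x `|` msupp y)%fset.
have hx : (msupp x `<=` d)%fset by rewrite fsubsetUl.
have hy : (msupp y `<=` d)%fset by rewrite fsubsetUr.
have hxy : (msupp (c *: x + y) `<=` d)%fset.
  apply/fsubsetP => p /(fsubsetP (msuppD_le _ _)).
  by rewrite !in_fsetU => /orP[/(fsubsetP (msuppZ_le _ _)) -> | ->]; rewrite ?orbT.
rewrite (mextEw f hx) (mextEw f hy) (mextEw f hxy) scaler_sumr -big_split /=.
by apply: eq_bigr => p _; rewrite mcoeffD mcoeffZ scalerDl scalerA.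
Qed.

Lemma mext0 f : mext f 0 = 0.
Proof. by rewrite /mext msupp0 big_seq_fset0. Qed.

Lemma mextD f x y : mext f (x + y) = mext f x + mext f y.
Proof. by have := mext_lin f 1 x y; rewrite !scale1r. Qed.

Lemma mextZ f c x : mext f (c *: x) = c *: mext f x.
Proof. by have := mext_lin f c x 0; rewrite !addr0 mext0 addr0. Qed.

Lemma mextN f x : mext f (- x) = - mext f x.
Proof. by have := mextZ f (-1) x; rewrite !scaleN1r. Qed.

Lemma mextB f x y : mext f (x - y) = mext f x - mext f y.
Proof. by rewrite mextD mextN. Qed.

Lemma mext_sum f (I : Type) (r : seq I) (P : pred I) (F : I -> {malg k[K]}) :
  mext f (\sum_(i <- r | P i) F i) = \sum_(i <- r | P i) mext f (F i).
Proof. exact: (big_morph (mext f) (mextD f) (mext0 f)). Qed.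

Lemma mextU f c p : mext f << c *g p >> = c *: f p.
Proof. by rewrite (mextEw f msuppU_le) big_seq_fset1 mcoeffUU. Qed.

Lemma mextU1 f p : mext f << p >> = f p.
Proof. by rewrite mextU scale1r. Qed.

Lemma mext_eq_in f g x : (forall p, p \in msupp x -> f p = g p) ->
  mext f x = mext g x.
Proof. by move=> h; rewrite /mext big_seq_cond [RHS]big_seq_cond; apply: eq_bigr => p /andP[/h ->]. Qed.

Lemma mext_flin f g c x :
  mext (fun p => c *: f p + g p) x = c *: mext f x + mext g x.
Proof.
by rewrite /mext scaler_sumr -big_split; apply: eq_bigr => p _; rewrite scalerDr !scalerA mulrC.
Qed.

Lemma mext_f0 x : mext (fun _ => 0) x = 0.
Proof. by rewrite /mext big1 // => p _; rewrite scaler0. Qed.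

Lemma mext_fadd f g x : mext (fun p => f p + g p) x = mext f x + mext g x.
Proof. by rewrite /mext -big_split; apply: eq_bigr => p _; rewrite scalerDr. Qed.

Lemma mext_fscale f c x : mext (fun p => c *: f p) x = c *: mext f x.
Proof. by rewrite /mext scaler_sumr; apply: eq_bigr => p _; rewrite !scalerA mulrC. Qed.

Lemma mext_fopp f x : mext (fun p => - f p) x = - mext f x.
Proof. by rewrite /mext -sumrN; apply: eq_bigr => p _; rewrite scalerN. Qed.

Lemma mext_fsub f g x : mext (fun p => f p - g p) x = mext f x - mext g x.
Proof. by rewrite mext_fadd mext_fopp. Qed.

Lemma mext_fsum (I : Type) (r : seq I) (P : pred I) (F : I -> K -> M) x :
  mext (fun p => \sum_(i <- r | P i) F i p) x = \sum_(i <- r | P i) mext (F i) x.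
Proof.
rewrite /mext; under eq_bigr do rewrite scaler_sumr.
by rewrite exchange_big.
Qed.

Lemma mext_if (b : bool) f x : mext (fun p => if b then f p else 0) x = if b then mext f x else 0.
Proof. by case: b => //; rewrite mext_f0. Qed.


End Mext.

Lemma mext_id {k : fieldType} {K : choiceType} (x : {malg k[K]}) : mext (fun p => << p >>) x = x.
Proof.
rewrite [RHS]monalgE; apply: eq_bigr => p _.
apply/malgP => q; rewrite mcoeffZ !mcoeffU; case: eqP => _; by rewrite ?mulr1 ?mulr0.
Qed.

Definition islin {k : fieldType} {M N : lmodType k} (h : M -> N) :=
  forall c u v, h (c *: u + v) = c *: h u + h v.

Section Islin.
Context {k : fieldType} {M N : lmodType k} (h : M -> N) (hl : islin h).
Lemma islin0 : h 0 = 0.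
Proof.
have e := hl 1 0 0; rewrite !scale1r addr0 in e.
by have := congr1 (fun t => t - h 0) e; rewrite /= addrK subrr => /esym.
Qed.
Lemma islinD u v : h (u + v) = h u + h v.
Proof. by have := hl 1 u v; rewrite !scale1r. Qed.
Lemma islinZ c u : h (c *: u) = c *: h u.
Proof. by have := hl c u 0; rewrite !addr0 islin0 addr0. Qed.
Lemma islinN u : h (- u) = - h u.
Proof. by have := islinZ (-1) u; rewrite !scaleN1r. Qed.
Lemma islinB u v : h (u - v) = h u - h v.
Proof. by rewrite islinD islinN. Qed.
Lemma islin_sum (I : Type) (r : seq I) (P : pred I) (F : I -> M) :
  h (\sum_(i <- r | P i) F i) = \sum_(i <- r | P i) h (F i).
Proof. exact: (big_morph h islinD islin0). Qed.
Lemma islin_mext {K : choiceType} (f : K -> M) x : h (mext f x) = mext (fun p => h (f p)) x.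
Proof. by rewrite /mext islin_sum; apply: eq_bigr => p _; rewrite islinZ. Qed.
End Islin.

Lemma islin_mext_arg {k : fieldType} {K : choiceType} {M : lmodType k} (f : K -> M) :
  islin (mext f).
Proof. by move=> c u v; apply: mext_lin. Qed.

Lemma mext_comp {k : fieldType} {K K' : choiceType} {M : lmodType k} (f : K -> M)
  (g : K' -> {malg k[K]}) w :
  mext f (mext g w) = mext (fun u => mext f (g u)) w.
Proof. exact: (islin_mext (islin_mext_arg f)). Qed.

Lemma mext_swap {k : fieldType} {K K' : choiceType} {M : lmodType k}
  (F : K -> K' -> M) x l :
  mext (fun p => mext (fun d => F p d) l) x = mext (fun d => mext (fun p => F p d) x) l.
Proof.
rewrite /mext; under eq_bigr do rewrite scaler_sumr.
rewrite exchange_big /=; apply: eq_bigr => d _; rewrite scaler_sumr.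
by apply: eq_bigr => p _; rewrite !scalerA mulrC.
Qed.

Lemma msupp_sum {k : fieldType} {K : choiceType} (I : eqType) (r : seq I) (P : pred I)
  (F : I -> {malg k[K]}) d :
  d \in msupp (\sum_(i <- r | P i) F i) -> exists2 i, i \in r & d \in msupp (F i).
Proof.
elim: r => [|i r IH]; first by rewrite big_nil msupp0.
rewrite big_cons; case: (P i) => [|/IH [j jr dj]]; last by exists j; rewrite ?inE ?jr ?orbT.
move=> /(fsubsetP (msuppD_le _ _)); rewrite in_fsetU => /orP [h|/IH [j jr dj]].
  by exists i; rewrite ?inE ?eqxx.
by exists j; rewrite ?inE ?jr ?orbT.
Qed.

Lemma msupp_mext {k : fieldType} {K K' : choiceType} (f : K -> {malg k[K']}) x d :
  d \in msupp (mext f x) -> exists2 p, p \in msupp x & d \in msupp (f p).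
Proof.
move=> /msupp_sum [p px]; move/(fsubsetP (msuppZ_le _ _)) => dp.
by exists p.
Qed.

Lemma zid (T : zmodType) (a1 a2 b1 b2 c1 c2 : T) :
  a1 - a2 - (b1 - b2) = a1 - c1 - (c2 - b2) - (a2 - c2 - (c1 - b1)).
Proof.
rewrite !opprB !addrA.
rewrite (addrAC (a1 - c1 + b2) (-c2) c1) (addrAC (a1 - c1) b2 c1) subrK.
rewrite (addrAC (a1 + b2 - c2) (-b1) c2) subrK.
by rewrite (addrAC a1 (-a2)) (addrAC (a1 + b2) (-a2)) (addrAC (a1 + b2) (-b1)).
Qed.

Lemma ad_comm_abs (T : zmodType) (mu : T -> T -> T)
  (mBl : forall x y z, mu (x - y) z = mu x z - mu y z)
  (mBr : forall x y z, mu x (y - z) = mu x y - mu x z)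
  (mA : forall x y z, mu (mu x y) z = mu x (mu y z)) m1 m2 y :
  mu (mu m1 m2 - mu m2 m1) y - mu y (mu m1 m2 - mu m2 m1) =
  (mu m1 (mu m2 y - mu y m2) - mu (mu m2 y - mu y m2) m1) -
  (mu m2 (mu m1 y - mu y m1) - mu (mu m1 y - mu y m1) m2).
Proof. rewrite !mBl !mBr !mA; exact: zid. Qed.
Section Paths.
Context {k : fieldType} {V A : finType} (src tgt : A -> V) (Z : seq (qpath V A)).
Hypothesis hZ : all (fun z => 1 < size z.2)%N Z.

Local Notation isB := (inB src tgt Z).
Local Notation pt := (ptgt tgt).
Local Notation ft := (foldl (fun _ a => tgt a)).
Local Notation mul := (@lmul k V A src tgt Z).
Local Notation mB := (mulB k src tgt Z).
Local Notation LamT := (Lam k V A).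

Fixpoint vchain (x : V) (s : seq A) : bool :=
  if s is a :: q then (src a == x) && vchain (tgt a) q else true.

Lemma valid_vchain p : valid src tgt p = vchain p.1 p.2.
Proof.
case: p => x [|a q] //=; congr andb.
by elim: q a => [|b q IH] a //=; rewrite IH eq_sym.
Qed.

Lemma vchain_cat x s t : vchain x (s ++ t) = vchain x s && vchain (ft x s) t.
Proof. by elim: s x => [|a s IH] x //=; rewrite IH andbA. Qed.

Definition noZ (s : seq A) := ~~ has (fun z => infix z.2 s) Z.

Lemma inBE d : isB d = vchain d.1 d.2 && noZ d.2.
Proof.
rewrite /inB valid_vchain; congr (_ && ~~ _); apply: eq_in_has => -[z1 [|b q]] zZ //.
by have := allP hZ _ zZ.
Qed.

Lemma noZ_catl s t : noZ (s ++ t) -> noZ s.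
Proof. by apply: contra; apply: sub_has => z; apply: infix_catr. Qed.

Lemma noZ_catr s t : noZ (s ++ t) -> noZ t.
Proof. by apply: contra; apply: sub_has => z; apply: infix_catl. Qed.

Lemma inB_catl x s t : isB (x, s ++ t) -> isB (x, s).
Proof. by rewrite !inBE /= vchain_cat => /andP[/andP[-> _] /noZ_catl]. Qed.

Lemma inB_catr x s t : isB (x, s ++ t) -> isB (ft x s, t).
Proof. by rewrite !inBE /= vchain_cat => /andP[/andP[_ ->] /noZ_catr]. Qed.

Lemma inB_vpath (v : V) : isB (vpath A v).
Proof.
rewrite inBE /= /noZ; apply/hasPn => -[z1 [|b q]] zZ //=.
by have := allP hZ _ zZ.
Qed.

Lemma inB_apath (a : A) : isB (apath src a).
Proof.
rewrite inBE /= eqxx /noZ; apply/hasPn => -[z1 [|b [|c q]]] zZ /=;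
  have := allP hZ _ zZ => //= _.
by rewrite andbF.
Qed.

Lemma lmulE x y : mul x y = mext (fun b => mext (fun a => mB b a) y) x.
Proof.
rewrite /lmul /mext; apply: eq_bigr => b _; rewrite scaler_sumr.
by apply: eq_bigr => a _; rewrite scalerA.
Qed.

Lemma lmul_linl y : islin (fun x => mul x y).
Proof. by move=> c u v; rewrite !lmulE mext_lin. Qed.

Lemma lmul_linr x : islin (mul x).
Proof.
move=> c u v; rewrite !lmulE -mext_flin; apply: mext_eq_in => b _.
exact: mext_lin.
Qed.

Lemma lmulUU b a : mul << b >> << a >> = mB b a.
Proof. by rewrite lmulE !mextU1. Qed.

Lemma lmul_basis_l x a : mul x << a >> = mext (fun b => mB b a) x.
Proof. by rewrite lmulE; apply: mext_eq_in => b _; rewrite mextU1. Qed.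

Lemma lmul_basis_r b y : mul << b >> y = mext (mB b) y.
Proof. by rewrite lmulE mextU1. Qed.

Lemma lmul0l y : mul 0 y = 0.
Proof. exact: (islin0 (lmul_linl y)). Qed.
Lemma lmul0r x : mul x 0 = 0.
Proof. exact: (islin0 (lmul_linr x)). Qed.

Lemma ft_cat x s t : ft x (s ++ t) = ft (ft x s) t.
Proof. exact: foldl_cat. Qed.

Lemma mulB_assoc b a c : mul (mB b a) << c >> = mul << b >> (mB a c).
Proof.
case: a b c => [a1 a2] [b1 b2] [c1 c2].
rewrite /mulB /comp /psrc /ptgt /=.
case h1: (ft a1 a2 == b1); case h2: (isB (a1, a2 ++ b2));
case h3: (ft c1 c2 == a1); case h4: (isB (c1, c2 ++ a2)) => /=;
rewrite ?lmul0l ?lmul0r ?lmulUU /mulB /Defs.comp /psrc /ptgt /= ?ft_cat ?catA ?h1 ?h2 ?h3 ?h4 //=;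
rewrite ?(eqP h3) ?h1 //=.
- by case: ifP => // /inB_catl; rewrite h4.
- by case: ifP => //; rewrite -catA => /inB_catr; rewrite (eqP h3) h2.
Qed.
Lemma lmul_expand_r x z : mul x z = mext (fun c => mul x << c >>) z.
Proof.
rewrite lmulE mext_swap; apply: mext_eq_in => c _; by rewrite lmul_basis_l.
Qed.

Lemma lmul_expand_l x z : mul x z = mext (fun b => mul << b >> z) x.
Proof. by rewrite lmulE; apply: mext_eq_in => b _; rewrite lmul_basis_r. Qed.

Lemma lmulA x y z : mul (mul x y) z = mul x (mul y z).
Proof.
rewrite (lmulE x y) (islin_mext (lmul_linl z)) [in RHS]lmul_expand_l.
apply: mext_eq_in => b _.
rewrite (islin_mext (lmul_linl z)) [in RHS](lmul_expand_l y) (islin_mext (lmul_linr _)).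
apply: mext_eq_in => a _.
rewrite lmul_expand_r (lmul_basis_r a z) lmul_basis_r mext_comp.
by apply: mext_eq_in => c _; rewrite mulB_assoc lmul_basis_r.
Qed.

Lemma lmulBl x y z : mul (x - y) z = mul x z - mul y z.
Proof. exact: (islinB (lmul_linl z)). Qed.
Lemma lmulBr x y z : mul x (y - z) = mul x y - mul x z.
Proof. exact: (islinB (lmul_linr x)). Qed.

Local Notation adm := (@ad k V A src tgt Z).

Lemma islin_ad m : islin (adm m).
Proof.
by move=> c u v; rewrite /ad (lmul_linr m) (lmul_linl m) scalerBr opprD addrACA.
Qed.

Lemma islin_adl y : islin (fun m => adm m y).
Proof.
by move=> c u v; rewrite /ad (lmul_linr y) (lmul_linl y) scalerBr opprD addrACA.
Qed.

Lemma ad_leibniz m x y : adm m (mul x y) = mul (adm m x) y + mul x (adm m y).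
Proof.
rewrite /ad lmulBl lmulBr !lmulA.
by rewrite addrA subrK.
Qed.

Lemma ad_comm m1 m2 y :
  adm (mul m1 m2 - mul m2 m1) y = adm m1 (adm m2 y) - adm m2 (adm m1 y).
Proof. exact: (ad_comm_abs lmulBl lmulBr lmulA). Qed.
Definition suppP {K : choiceType} (Pr : pred K) (x : {malg k[K]}) :=
  forall d, d \in msupp x -> Pr d.

Lemma suppP_mext {K K' : choiceType} (Pr : pred K) (f : K' -> {malg k[K]}) x :
  (forall p, p \in msupp x -> suppP Pr (f p)) -> suppP Pr (mext f x).
Proof. by move=> h d /msupp_mext [p px dp]; exact: h px _ dp. Qed.

Lemma suppP0 {K : choiceType} (Pr : pred K) : suppP Pr 0.
Proof. by move=> d; rewrite msupp0. Qed.

Lemma suppPD {K : choiceType} (Pr : pred K) x y :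
  suppP Pr x -> suppP Pr y -> suppP Pr (x + y).
Proof.
move=> hx hy d /(fsubsetP (msuppD_le _ _)); rewrite in_fsetU => /orP[/hx|/hy] //.
Qed.

Lemma suppPN {K : choiceType} (Pr : pred K) x : suppP Pr x -> suppP Pr (- x).
Proof. by move=> hx d; rewrite msuppN => /hx. Qed.

Lemma suppPB {K : choiceType} (Pr : pred K) x y :
  suppP Pr x -> suppP Pr y -> suppP Pr (x - y).
Proof. by move=> hx hy; apply: suppPD => //; apply: suppPN. Qed.

Lemma suppPZ {K : choiceType} (Pr : pred K) c x : suppP Pr x -> suppP Pr (c *: x).
Proof. by move=> hx d /(fsubsetP (msuppZ_le _ _)) /hx. Qed.

Lemma suppP_sum {K : choiceType} (Pr : pred K) (I : Type) (r : seq I) (P : pred I)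
  (F : I -> {malg k[K]}) : (forall i, P i -> suppP Pr (F i)) ->
  suppP Pr (\sum_(i <- r | P i) F i).
Proof.
move=> h; elim: r => [|i r IH]; first by rewrite big_nil; apply: suppP0.
rewrite big_cons; case: ifP => // Pi; apply: suppPD => //; exact: h.
Qed.

Lemma msuppU1' {K : choiceType} (p d : K) : d \in msupp (<< p >> : {malg k[K]}) -> d = p.
Proof. by rewrite msuppU oner_eq0 inE => /eqP. Qed.

Lemma suppPU {K : choiceType} (Pr : pred K) p : Pr p -> suppP Pr (<< p >> : {malg k[K]}).
Proof. by move=> h d /msuppU1' ->. Qed.

Lemma msupp_mulB d b a : d \in msupp (mB b a) ->
  [/\ pt a == psrc b, isB (Defs.comp b a) & d = Defs.comp b a].
Proof.
rewrite /mulB; case: ifP => [/andP[h1 h2] /msuppU1' -> //|_]; by rewrite msupp0.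
Qed.

Lemma msupp_lmul x y d : d \in msupp (mul x y) ->
  exists b a, [/\ b \in msupp x, a \in msupp y, pt a == psrc b, isB (Defs.comp b a) & d = Defs.comp b a].
Proof.
rewrite lmulE => /msupp_mext [b bx] /msupp_mext [a ay] /msupp_mulB [h1 h2 ->].
by exists b, a.
Qed.

Lemma inLam_lmul x y : inLam src tgt Z (mul x y).
Proof. by move=> d /msupp_lmul [b [a [_ _ _ h ->]]]. Qed.


Lemma inLam_ad m y : inLam src tgt Z (adm m y).
Proof. by apply: suppPB; apply: inLam_lmul. Qed.

Lemma inLamU d : isB d -> inLam src tgt Z (<< d >> : LamT).
Proof. exact: suppPU. Qed.

Definition cyc (x : LamT) := suppP (fun d => psrc d == pt d) x.

Lemma pt_comp b a : pt a = psrc b -> pt (Defs.comp b a) = pt b.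
Proof. by case: a b => a1 a2 [b1 b2]; rewrite /ptgt /Defs.comp /psrc /= ft_cat => ->. Qed.

Lemma cyc_lmul x y : cyc x -> cyc y -> cyc (mul x y).
Proof.
move=> hx hy d /msupp_lmul [b [a [bx ay /eqP e _ ->]]].
rewrite pt_comp // -(eqP (hx _ bx)) -e.
by have := hy _ ay; case: a {e ay}.
Qed.

Lemma cyc_central m v : cyc m -> mul m (evert k A v) = mul (evert k A v) m.
Proof.
move=> hm; rewrite /evert lmul_basis_l lmul_basis_r; apply: mext_eq_in => d dm.
have := hm _ dm; case: d {dm} => d1 d2 /eqP /= e.
rewrite /mulB /Defs.comp /psrc /ptgt /= cats0.
rewrite /ptgt /= in e; rewrite -e [v == d1]eq_sym.
by case: eqP => // ->.
Qed.
Local Notation rpl := (repl k src tgt Z).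

Definition rterm (r : qpath V A) : LamT := if isB r then << r >> else 0.

Lemma lmul_apath_rterm b x s :
  mul << apath src b >> (rterm (x, s)) = rterm (x, rcons s b).
Proof.
rewrite /rterm; case: ifP => h.
  rewrite lmulUU /mulB /Defs.comp /apath /psrc /= cats1.
  case h2: (isB (x, rcons s b)); rewrite ?andbF ?andbT //.
  move: h2; rewrite inBE /= -cats1 vchain_cat /=.
  by case/andP => /andP[_ /andP[/eqP -> _]] _ ; rewrite eqxx.
rewrite lmul0r; case: ifP => // h2; move: h2; rewrite -cats1 => /inB_catl.
by rewrite h.
Qed.

Lemma repl_nat a u v t :
  rpl a u (v, t) = \sum_(0 <= i < size t)
     (if nth a t i == a then rterm (v, take i t ++ u.2 ++ drop i.+1 t) else 0).
Proof.
rewrite /repl /= big_mkcond /=.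
rewrite (big_mkord xpredT (fun i => if nth a t i == a then rterm (v, take i t ++ u.2 ++ drop i.+1 t) else 0)).
by apply: eq_bigr => i _.
Qed.

Lemma repl_rcons a u v s b : u.1 = src a -> isB (v, rcons s b) ->
  rpl a u (v, rcons s b) =
  mul << apath src b >> (rpl a u (v, s)) + (if b == a then mB u (v, s) else 0).
Proof.
move=> hu hB.
rewrite !repl_nat size_rcons big_nat_recr //= (islin_sum (lmul_linr _)).
congr (_ + _).
  apply: eq_big_nat => i /andP[_ ltis].
  rewrite nth_rcons ltis; case: ifP => _; last by rewrite lmul0r.
  rewrite lmul_apath_rterm (drop_rcons ltis) -[rcons s b]cats1 take_cat ltis.
  by rewrite !rcons_cat.
rewrite nth_rcons ltnn eqxx -cats1 take_cat ltnn subnn take0 cats0.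
rewrite drop_oversize ?size_cat /= ?addn1 // cats0.
case: eqP => // ea; rewrite /mulB /Defs.comp /psrc /rterm /=.
move: hB; rewrite inBE /= -cats1 vchain_cat /= => /andP[/andP[_ /andP[/eqP e _]] _].
by rewrite /ptgt /= -e hu ea eqxx.
Qed.
Local Notation Q1 := (Q1B k V A).

Definition Phi' (x : Q1) (d : qpath V A) : LamT := mext (fun p => rpl p.1 p.2 d) x.
Definition Phi (x : Q1) (l : LamT) : LamT :=
  mext (fun p => mext (fun d => rpl p.1 p.2 d) l) x.
Definition Xm (m : LamT) : Q1 := \sum_(a : A) pairl a (adm m << apath src a >>).

Lemma pairlE a (w : LamT) : pairl a w = mext (fun d => << (a, d) >>) w.
Proof. by []. Qed.

Lemma PhiE x l : Phi x l = mext (fun d => Phi' x d) l.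
Proof. by rewrite /Phi mext_swap. Qed.

Lemma Phi'_pairl a w d : Phi' (pairl a w) d = mext (fun u => rpl a u d) w.
Proof. by rewrite /Phi' pairlE mext_comp; apply: mext_eq_in => u _; rewrite mextU1. Qed.

Lemma Phi'_X m d :
  Phi' (Xm m) d = \sum_(a : A) mext (fun u => rpl a u d) (adm m << apath src a >>).
Proof.
rewrite /Phi' /Xm mext_sum; apply: eq_bigr => a _; exact: Phi'_pairl.
Qed.

Lemma supp_ad_apath m a : cyc m ->
  suppP (fun u : qpath V A => u.1 == src a) (adm m << apath src a >>).
Proof.
move=> hm; apply: suppPB => d /msupp_lmul [b [a' [bx ay e _ ->]]];
  rewrite /Defs.comp /=.
  by rewrite (msuppU1' ay).
move: bx => /msuppU1' bE; move: e; rewrite bE /psrc /apath /= => /eqP <-.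
by have := hm _ ay; case: a' {ay}.
Qed.

Lemma R_rcons a w v s b : suppP (fun u : qpath V A => u.1 == src a) w ->
  isB (v, rcons s b) ->
  mext (fun u => rpl a u (v, rcons s b)) w =
  mul << apath src b >> (mext (fun u => rpl a u (v, s)) w) +
  (if b == a then mul w << (v, s) >> else 0).
Proof.
move=> hw hB; rewrite (islin_mext (lmul_linr _)) lmul_basis_l -mext_if -mext_fadd.
by apply: mext_eq_in => u uw; rewrite repl_rcons //; apply/eqP/hw.
Qed.

Lemma keyK m : cyc m -> forall d, isB d -> Phi' (Xm m) d = adm m << d >>.
Proof.
move=> hm [v s]; elim/last_ind: s => [|s b IH] hB.
  rewrite Phi'_X big1; last first.
    move=> a _; rewrite -[RHS](mext_f0 (adm m << apath src a >>)).
    by apply: mext_eq_in => u _; rewrite /repl /= big1 // => -[].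
  by rewrite /ad (cyc_central v hm) subrr.
have hB' : isB (v, s) by move: hB; rewrite -cats1 => /inB_catl.
rewrite Phi'_X.
under eq_bigr => a _ do rewrite (R_rcons (@supp_ad_apath m a hm) hB).
rewrite big_split /= -(islin_sum (lmul_linr _)) -Phi'_X IH //.
rewrite (bigD1 b) //= eqxx big1 ?addr0; last by move=> a /negbTE; rewrite eq_sym => ->.
have E : mul << apath src b >> << (v, s) >> = << (v, rcons s b) >>.
  by have := lmul_apath_rterm b v s; rewrite /rterm hB hB'.
by rewrite -E ad_leibniz addrC.
Qed.

Lemma PhiX m l : cyc m -> inLam src tgt Z l -> Phi (Xm m) l = adm m l.
Proof.
move=> hm hl; rewrite PhiE.
transitivity (mext (fun d => adm m << d >>) l).
  by apply: mext_eq_in => d dl; rewrite keyK // hl.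
by rewrite -(islin_mext (islin_ad m)) mext_id.
Qed.
Lemma islin_pairl a : islin (@pairl k V A a).
Proof. move=> c u v; rewrite !pairlE; exact: mext_lin. Qed.

Lemma islin_comp {M N O : lmodType k} (f : N -> O) (g : M -> N) :
  islin f -> islin g -> islin (fun x => f (g x)).
Proof. by move=> hf hg c u v; rewrite hg hf. Qed.

Lemma Xm_lin : islin Xm.
Proof.
move=> c u v; rewrite /Xm scaler_sumr -big_split; apply: eq_bigr => a _.
by rewrite (islin_adl _) (islin_pairl a).
Qed.

Lemma pairl_if a (b : bool) q : pairl a (if b then << q >> else 0 : LamT) =
  if b then << (a, q) >> else 0.
Proof. by case: b; rewrite pairlE ?mextU1 ?mext0. Qed.

Lemma psi0_basisE e g : isB g -> psrc g = e -> pt g = e ->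
  psi0_basis k src tgt Z (e, g) = - Xm << g >>.
Proof.
move=> hg he hte; rewrite /psi0_basis /Xm /ad.
under [in RHS]eq_bigr => a _ do rewrite (islinB (islin_pairl a)) !lmulUU.
rewrite sumrB opprB; congr (_ - _); rewrite big_mkcond; apply: eq_bigr => a _;
  rewrite /mulB pairl_if.
- by rewrite /psrc /apath /= hte eq_sym.
- by rewrite /ptgt /apath /= -/(psrc g) he.
Qed.

Definition mgof (g : Q0B k V A) : LamT := mext (fun p => << p.2 >>) g.

Lemma psi0X g : inQ0B src tgt Z g -> psi0 src tgt Z g = Xm (- mgof g).
Proof.
move=> hg; rewrite (islinN Xm_lin) /mgof (islin_mext Xm_lin) -mext_fopp.
rewrite /psi0 -/(mext _ g); apply: mext_eq_in => -[e gg] /hg /and3P [h1 /eqP h2 /eqP h3].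
exact: psi0_basisE.
Qed.

Lemma mgof_prop g : inQ0B src tgt Z g -> cyc (- mgof g) /\ inLam src tgt Z (- mgof g).
Proof.
move=> hg; split; apply: suppPN; apply: suppP_mext => p /hg /and3P [h1 /eqP h2 /eqP h3];
  apply: suppPU => //=.
by rewrite h2 h3.
Qed.

Lemma ImX x : inImpsi0 src tgt Z x -> exists m, [/\ cyc m, inLam src tgt Z m & x = Xm m].
Proof.
move=> [g hg ->]; have [h1 h2] := mgof_prop hg.
by exists (- mgof g); split => //; apply: psi0X.
Qed.

Lemma XinIm m : cyc m -> inLam src tgt Z m -> inImpsi0 src tgt Z (Xm m).
Proof.
move=> hc hl; pose g : Q0B k V A := - mext (fun d => << (psrc d, d) >>) m.
have hg : inQ0B src tgt Z g.
  apply: (@suppPN _ (fun p : V * qpath V A => [&& isB p.2, psrc p.2 == p.1 & pt p.2 == p.1])).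
  apply: suppP_mext => d dm; apply: suppPU => /=.
  by rewrite hl //= eqxx /= eq_sym (hc _ dm).
exists g; first exact: hg.
rewrite psi0X; last exact: hg.
suff -> : - mgof g = m by [].
rewrite /mgof /g mextN opprK mext_comp.
transitivity (mext (fun d => << d >>) m); last exact: mext_id.
by apply: mext_eq_in => d _; rewrite mextU1.
Qed.

Lemma mcoeff_sel (P : pred (qpath V A)) (x : LamT) d : d \in msupp x ->
  (mext (fun b => if P b then << b >> else 0) x)@_d = if P d then x@_d else 0.
Proof.
move=> dx; rewrite /mext raddf_sum (bigD1_seq d) ?fset_uniq //= big1 ?addr0.
  by rewrite mcoeffZ; case: (P d); rewrite ?mcoeffUU ?mcoeff0 ?mulr1 ?mulr0.
move=> b /negbTE bd; rewrite mcoeffZ; case: (P b); rewrite ?mcoeff0 ?mulr0 //.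
by rewrite mcoeffU bd mulr0.
Qed.

Lemma central_cyc m : inLam src tgt Z m ->
  (forall v, mul m (evert k A v) = mul (evert k A v) m) -> cyc m.
Proof.
move=> hl hc d dm; have := congr1 (mcoeff d) (hc (psrc d)).
rewrite /evert lmul_basis_l lmul_basis_r.
have e1 : mext (fun b => mB b (vpath A (psrc d))) m =
    mext (fun b => if b.1 == psrc d then << b >> else 0) m.
  apply: mext_eq_in => -[b1 b2] bm; rewrite /mulB /Defs.comp /psrc /ptgt /= eq_sym.
  by case: eqP => [e|//]; rewrite -e (hl _ bm).
have e2 : mext (mB (vpath A (psrc d))) m =
    mext (fun b => if pt b == psrc d then << b >> else 0) m.
  apply: mext_eq_in => -[b1 b2] bm; rewrite /mulB /Defs.comp /psrc /= cats0.
  by rewrite (hl _ bm) andbT.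
rewrite e1 e2 !mcoeff_sel // /psrc eqxx; case: eqP => [->//|_] e.
by move: dm; rewrite -mcoeff_neq0 e eqxx.
Qed.
Lemma Ebimod_cyc m : cyc m -> Ebimod src tgt Z (adm m).
Proof.
move=> hm v y _; have hc := cyc_central v hm; split.
  by rewrite /ad lmulBr -lmulA hc !lmulA.
by rewrite /ad lmulBl !lmulA hc.
Qed.

Lemma central_Ebimod m : Ebimod src tgt Z (adm m) ->
  forall v, mul m (evert k A v) = mul (evert k A v) m.
Proof.
move=> hE v.
have ee : mul (evert k A v) (evert k A v) = evert k A v.
  rewrite /evert lmulUU /mulB /Defs.comp /psrc /ptgt /= eqxx.
  by have := inB_vpath v; rewrite /vpath => ->.
have [H1 H2] := hE v (evert k A v) (inLamU (inB_vpath v)).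
rewrite ee /ad lmulBr -!lmulA ee in H1.
rewrite ee /ad lmulBl lmulA ee in H2.
have t1 : mul m (evert k A v) = mul (mul (evert k A v) m) (evert k A v).
  apply: (addIr (- mul (evert k A v) m)); exact: H1.
have t2 : mul (evert k A v) m = mul (mul (evert k A v) m) (evert k A v).
  apply: oppr_inj; apply: (addrI (mul m (evert k A v))); exact: H2.
exact: etrans t1 (esym t2).
Qed.

Lemma supp_Xm m : suppP (fun q : A * qpath V A => isB q.2) (Xm m).
Proof.
apply: suppP_sum => a _; rewrite pairlE; apply: suppP_mext => d dw.
apply: suppPU => /=; exact: inLam_ad dw.
Qed.

Lemma bracketE x y : bracket src tgt Z x y =
  mext (fun p => mext (fun q => br_basis k src tgt Z p q) y) x.
Proof.
rewrite /bracket /mext; apply: eq_bigr => b _; rewrite scaler_sumr.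
by apply: eq_bigr => a _; rewrite scalerA.
Qed.

Definition Tm (x y : Q1) : Q1 := mext (fun q => pairl q.1 (Phi' x q.2)) y.

Lemma bracketT x y : bracket src tgt Z x y = Tm x y - Tm y x.
Proof.
rewrite bracketE.
pose f := fun p : A * qpath V A => mext (fun q : A * qpath V A => pairl q.1 (rpl p.1 p.2 q.2)) y.
pose g := fun p : A * qpath V A => mext (fun q : A * qpath V A => pairl p.1 (rpl q.1 q.2 p.2)) y.
have E0 : mext (fun p => mext (fun q => br_basis k src tgt Z p q) y) x =
          mext (fun p => f p - g p) x.
  apply: mext_eq_in => p _; rewrite /f /g /br_basis; exact: mext_fsub.
have E1 : mext f x = Tm x y.
  rewrite /f mext_swap /Tm; apply: mext_eq_in => q _.
  rewrite /Phi'; symmetry; exact: (islin_mext (islin_pairl _)).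
have E2 : mext g x = Tm y x.
  rewrite /g /Tm; apply: mext_eq_in => p _.
  rewrite /Phi'; symmetry; exact: (islin_mext (islin_pairl _)).
apply: (etrans E0); apply: (etrans (mext_fsub f g x)).
exact: (congr2 (fun a b => a - b) E1 E2).
Qed.

Lemma TmX m1 m2 : cyc m1 ->
  Tm (Xm m1) (Xm m2) = \sum_(a : A) pairl a (adm m1 (adm m2 << apath src a >>)).
Proof.
move=> h1; rewrite /Tm {2}/Xm mext_sum; apply: eq_bigr => a _.
rewrite pairlE mext_comp.
transitivity (mext (fun u => pairl a (adm m1 << u >>)) (adm m2 << apath src a >>)).
  apply: mext_eq_in => u uw; rewrite mextU1 /=.
  by rewrite (keyK h1 (@inLam_ad m2 << apath src a >> u uw)).
rewrite -(islin_mext (islin_comp (islin_pairl a) (islin_ad m1))).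
by rewrite mext_id.
Qed.

Lemma bracketX m1 m2 : cyc m1 -> cyc m2 ->
  bracket src tgt Z (Xm m1) (Xm m2) = Xm (mul m1 m2 - mul m2 m1).
Proof.
move=> h1 h2; apply: (etrans (bracketT _ _)).
apply: (etrans (congr2 (fun a b => a - b) (@TmX m1 m2 h1) (@TmX m2 m1 h2))).
rewrite -sumrB /Xm; apply: eq_bigr => a _.
rewrite ad_comm; exact: (esym (islinB (islin_pairl a) _ _)).
Qed.

Lemma cycB x y : cyc x -> cyc y -> cyc (x - y).
Proof. exact: suppPB. Qed.
End Paths.

Theorem corollary1p9 (k : closedFieldType) (V A : finType) (src tgt : A -> V)
  (Z : seq (qpath V A)) :
  uniq Z ->
  all (valid src tgt) Z ->
  all (fun z => 1 < size z.2)%N Z ->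
  (forall z z', z \in Z -> z' \in Z -> subpath tgt z' z -> z' = z) ->
  (exists s : seq (qpath V A), forall d, inB src tgt Z d -> d \in s) ->
  exists phi : Q1B k V A -> Lam k V A -> Lam k V A,
    [/\ (forall (c : k) x y, inImpsi0 src tgt Z x -> inImpsi0 src tgt Z y ->
           forall l, inLam src tgt Z l -> phi (c *: x + y) l = c *: phi x l + phi y l),
        (forall x y, inImpsi0 src tgt Z x -> inImpsi0 src tgt Z y ->
           (forall l, inLam src tgt Z l -> phi x l = phi y l) -> x = y),
        (forall x, inImpsi0 src tgt Z x -> inAdE src tgt Z (phi x)),
        (forall D, inAdE src tgt Z D ->
           exists2 x, inImpsi0 src tgt Z x &
             forall l, inLam src tgt Z l -> phi x l = D l) &
        (forall x y, inImpsi0 src tgt Z x -> inImpsi0 src tgt Z y ->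
           forall l, inLam src tgt Z l ->
             phi (bracket src tgt Z x y) l = phi x (phi y l) - phi y (phi x l))].
Proof.
move=> _ _ hZ _ _.
exists (Phi src tgt Z); split.
- move=> c x y _ _ l _; exact: mext_lin.
- move=> x y /ImX [m1 [h1 l1 ->]] /ImX [m2 [h2 l2 ->]] H.
  rewrite /Xm; apply: eq_bigr => a _.
  have la := inLamU (k := k) (inB_apath src tgt hZ a).
  exact (congr1 (pairl a) (etrans (esym (PhiX hZ h1 la)) (etrans (H _ la) (PhiX hZ h2 la)))).
- move=> x /ImX [m [hc hl ->]]; exists m; split.
  + exact: hl.
  + move=> v y0 hy0; exact: (Ebimod_cyc hZ hc v hy0).
  + move=> y hy; exact (PhiX hZ hc hy).
- move=> D [m [hl hE hD]].
  have hc := central_cyc hl (central_Ebimod hZ hE).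
  exists (Xm src tgt Z m); first exact: XinIm hc hl.
  move=> l hl'; exact (etrans (PhiX hZ hc hl') (esym (hD l hl'))).
- move=> x y /ImX [m1 [h1 l1 ->]] /ImX [m2 [h2 l2 ->]] l hl.
  have hcc := cycB (cyc_lmul (src := src) (Z := Z) h1 h2) (cyc_lmul (src := src) (Z := Z) h2 h1).
  have e1 := PhiX hZ h2 hl.
  have e2 := PhiX hZ h1 hl.
  have e3 := PhiX hZ h1 (inLam_ad (src := src) (Z := Z) (m := m2) (y := l)).
  have e4 := PhiX hZ h2 (inLam_ad (src := src) (Z := Z) (m := m1) (y := l)).
  apply (etrans (congr1 (fun x => Phi src tgt Z x l) (bracketX src hZ h1 h2))).
  apply (etrans (PhiX hZ hcc hl)); apply (etrans (ad_comm src tgt hZ m1 m2 l)).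
  symmetry.
  exact (congr2 (fun a b => a - b) (etrans (congr1 (Phi src tgt Z (Xm src tgt Z m1)) e1) e3)
           (etrans (congr1 (Phi src tgt Z (Xm src tgt Z m2)) e2) e4)).
Qed.
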